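(* Let $D$ be a division semialgebra over $\mathbb{Z}_\mathrm{max}$ with finite unit index. Then $D$ is selective: for all $x,y\in D$, either $x+y=x$ or $x+y=y$.
   Context: A (possibly noncommutative) semiring has a commutative associative addition with identity $0$ and an associative multiplication with identity $1$, satisfying both distributive laws; a division semiring is one in which every nonzero element is invertible. $\mathbb{Z}_\mathrm{max}=\mathbb{Z}\cup\{-\infty\}$ is the semifield with addition $\max$ and multiplication ordinary addition. A division semialgebra over a semifield $K$ is a division semiring $D$ with an injective homomorphism from $K$ into the center of $D$. The unit index is $\mathrm{ui}(D/K)=|D^\times/K^\times|$. *)

(* Defs.v *)
(* NOTE: no absorbing-zero axiom is
   assumed, since the paper's definition does not list it. *)
From Stdlib Require Import ZArith List Lia.
Open Scope Z_scope.

Record Semiring := {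
  car :> Type;
  sadd : car -> car -> car;
  smul : car -> car -> car;
  szero : car;
  sone : car;
  sadd_assoc : forall x y z, sadd x (sadd y z) = sadd (sadd x y) z;
  sadd_comm : forall x y, sadd x y = sadd y x;
  sadd_0l : forall x, sadd szero x = x;
  smul_assoc : forall x y z, smul x (smul y z) = smul (smul x y) z;
  smul_1l : forall x, smul sone x = x;
  smul_1r : forall x, smul x sone = x;
  smul_addl : forall x y z, smul (sadd x y) z = sadd (smul x z) (smul y z);
  smul_addr : forall x y z, smul x (sadd y z) = sadd (smul x y) (smul x z)
}.

Arguments sadd {s}. Arguments smul {s}. Arguments szero {s}. Arguments sone {s}.

Definition is_unit {D : Semiring} (x : D) : Prop :=
  exists y : D, smul x y = sone /\ smul y x = sone.

Definition division_semiring (D : Semiring) : Prop :=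
  forall x : D, x <> szero -> is_unit x.

(* The semifield Z_max = Z ∪ {-oo} with addition max and multiplication +;
   None represents -oo. *)
Definition zmax := option Z.
Definition zmax_add (a b : zmax) : zmax :=
  match a, b with
  | None, y => y
  | x, None => x
  | Some x, Some y => Some (Z.max x y)
  end.
Definition zmax_mul (a b : zmax) : zmax :=
  match a, b with
  | Some x, Some y => Some (x + y)
  | _, _ => None
  end.

Definition Zmax : Semiring.
Proof.
  refine {| car := zmax; sadd := zmax_add; smul := zmax_mul;
            szero := None; sone := Some 0 |};
  repeat (let x := fresh in intro x; destruct x as [x|]); simpl;
  try reflexivity; f_equal; lia.
Defined.

Definition is_semiring_hom {K D : Semiring} (f : K -> D) : Prop :=
  f szero = szero /\ f sone = sone /\
  (forall a b, f (sadd a b) = sadd (f a) (f b)) /\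
  (forall a b, f (smul a b) = smul (f a) (f b)).

Definition division_semialgebra (K D : Semiring) (f : K -> D) : Prop :=
  division_semiring D /\ is_semiring_hom f /\
  (forall a b, f a = f b -> a = b) /\
  (forall (a : K) (x : D), smul (f a) x = smul x (f a)).

(* Finite unit index: D^x / f(K^x) is finite, i.e. there are finitely many
   units v_1..v_m such that every unit of D lies in some coset v_i f(K^x). *)
Definition finite_unit_index (K D : Semiring) (f : K -> D) : Prop :=
  exists s : list D,
    (forall v, In v s -> is_unit v) /\
    forall u : D, is_unit u ->
      exists v, In v s /\ exists k : K, is_unit k /\ u = smul v (f k).

Definition selective (D : Semiring) : Prop :=
  forall x y : D, sadd x y = x \/ sadd x y = y.

(* Main.v *)
Require Import Defs.
From Stdlib Require Import ZArith List Lia Classical ClassicalEpsilon.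

Section S.
Variable D : Semiring.

Fixpoint pw (u : D) (n : nat) : D :=
  match n with O => sone | S n => smul u (pw u n) end.

Lemma pw_add u m n : pw u (m + n) = smul (pw u m) (pw u n).
Proof.
  induction m; simpl. now rewrite smul_1l.
  now rewrite IHm, smul_assoc.
Qed.

Lemma pw_S_r u n : pw u (S n) = smul (pw u n) u.
Proof.
  replace (S n) with (n + 1)%nat by lia. rewrite pw_add. simpl.
  now rewrite smul_1r.
Qed.

Lemma cancel_l (s a b : D) : is_unit s -> smul s a = smul s b -> a = b.
Proof.
  intros [t [_ Ht]] E.
  rewrite <- (smul_1l D a), <- (smul_1l D b), <- Ht, <- !smul_assoc, E.
  reflexivity.
Qed.

Lemma unit_mul (a b : D) : is_unit a -> is_unit b -> is_unit (smul a b).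
Proof.
  intros [a' [H1 H2]] [b' [H3 H4]]. exists (smul b' a'). split.
  - rewrite <- smul_assoc, (smul_assoc _ b b' a'), H3, smul_1l; auto.
  - rewrite <- smul_assoc, (smul_assoc _ a' a b), H2, smul_1l; auto.
Qed.

Lemma unit_pw u n : is_unit u -> is_unit (pw u n).
Proof.
  intros H; induction n; simpl.
  - exists sone; split; apply smul_1l.
  - now apply unit_mul.
Qed.

Hypothesis idem1 : sadd (sone : D) sone = sone.
Hypothesis one_ne0 : (sone : D) <> szero.

Lemma idem (x : D) : sadd x x = x.
Proof.
  rewrite <- (smul_1r D x), <- smul_addr, idem1. reflexivity.
Qed.

Fixpoint T (u : D) (n : nat) : D :=
  match n with O => sone | S n => sadd (T u n) (pw u (S n)) end.

Lemma T_mul u n : sadd (smul (T u n) u) sone = T u (S n).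
Proof.
  induction n.
  - simpl. rewrite smul_1l, smul_1r, sadd_comm. reflexivity.
  - change (T u (S (S n))) with (sadd (T u (S n)) (pw u (S (S n)))).
    transitivity (sadd (sadd (smul (T u n) u) sone) (pw u (S (S n)))); [|now rewrite IHn].
    change (T u (S n)) with (sadd (T u n) (pw u (S n))).
    rewrite smul_addl, <- (pw_S_r u (S n)).
    rewrite <- !sadd_assoc. f_equal. apply sadd_comm.
Qed.

Lemma T_one u n : sadd (T u n) sone = T u n.
Proof.
  induction n; simpl. apply idem1.
  rewrite <- sadd_assoc, (sadd_comm _ (pw u (S n))), sadd_assoc, IHn. reflexivity.
Qed.

Lemma T_top u n : sadd (smul (T u n) u) (pw u (S n)) = smul (T u n) u.
Proof.
  induction n.
  - simpl. rewrite smul_1l, smul_1r. apply idem.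
  - change (T u (S n)) with (sadd (T u n) (pw u (S n))).
    rewrite smul_addl, <- (pw_S_r u (S n)), <- sadd_assoc, idem. reflexivity.
Qed.

Lemma T_ne0 u n : T u n <> szero.
Proof.
  intro E. apply one_ne0. pose proof (T_one u n) as H. rewrite E in H.
  rewrite sadd_0l in H. exact H.
Qed.

Lemma sel_unit (u : D) m :
  is_unit u -> division_semiring D ->
  (sadd sone (pw u (S m)) = pw u (S m) \/ sadd sone (pw u (S m)) = sone) ->
  sadd sone u = u \/ sadd sone u = sone.
Proof.
  intros Hu Hd [H|H]; set (s := T u m) in *.
  - left. assert (E1 : sadd (smul s u) sone = sadd s (pw u (S m))) by apply T_mul.
    assert (E2 : smul s u = sadd s (pw u (S m))).
    { assert (E0 : sadd (smul s u) (pw u (S m)) = smul s u) by apply T_top.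
      set (P := pw u (S m)) in *.
      transitivity (sadd (smul s u) (sadd sone P)); [rewrite H; auto|].
      rewrite sadd_assoc, E1, <- sadd_assoc, idem. reflexivity. }
    apply (cancel_l s). apply Hd, T_ne0.
    rewrite smul_addr, smul_1r, E2, sadd_assoc, idem. reflexivity.
  - right. assert (E1 : sadd (smul s u) sone = sadd s (pw u (S m))) by apply T_mul.
    assert (E2 : sadd s (pw u (S m)) = s).
    { assert (E0 : sadd s sone = s) by apply T_one.
      rewrite <- E0 at 1. rewrite <- sadd_assoc, H. exact E0. }
    rewrite E2 in E1.
    apply (cancel_l s). apply Hd, T_ne0.
    rewrite smul_addr, !smul_1r. rewrite <- E1 at 1.
    rewrite (sadd_comm D (sadd _ _) (smul s u)), sadd_assoc, idem. exact E1.
Qed.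

End S.

Theorem mainTheorem15 (D : Semiring) (f : Zmax -> D) :
  division_semialgebra Zmax D f ->
  finite_unit_index Zmax D f ->
  selective D.
Proof.
  intros [Hd [[f0 [f1 [fadd fmul]]] [finj _]]] [s [Hs Hfin]].
  assert (idem1 : sadd (sone : D) sone = sone).
  { rewrite <- f1, <- fadd. reflexivity. }
  assert (one_ne0 : (sone : D) <> szero).
  { rewrite <- f1, <- f0. intro E. apply finj in E. discriminate. }
  assert (Hpow : forall u : D, is_unit u -> exists m k, pw D u (S m) = f (Some k)).
  { intros u Hu.
    assert (Hj : forall j, exists v, In v s /\ exists k : Zmax, is_unit k /\ pw D u j = smul v (f k)).
    { intro j. apply Hfin, unit_pw, Hu. }
    pose (g := fun j => proj1_sig (constructive_indefinite_description _ (Hj j))).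
    assert (Hg : forall j, In (g j) s /\ exists k : Zmax, is_unit k /\ pw D u j = smul (g j) (f k)).
    { intro j. unfold g. destruct (constructive_indefinite_description _ (Hj j)); auto. }
    assert (Key : forall i j, (i < j)%nat -> g i = g j -> exists m k, pw D u (S m) = f (Some k)).
    { intros i j Hij Eg.
      destruct (Hg i) as [Hvs [a [[a' [Ha _]] Ei]]].
      destruct (Hg j) as [_ [b [[b' [Hb _]] Ej]]].
      destruct a as [a|]; [|discriminate].
      destruct b as [b|].
      2:{ discriminate. }
      exists (j - i - 1)%nat, (b - a)%Z.
      rewrite <- Eg in Ej.
      replace j with (i + S (j - i - 1))%nat in Ej by lia.
      rewrite pw_add, Ei, <- smul_assoc in Ej.
      apply (cancel_l D) in Ej; [|apply Hs; exact Hvs].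
      apply (f_equal (smul (f (Some (- a)%Z)))) in Ej.
      rewrite !smul_assoc, <- !fmul in Ej. simpl in Ej.
      replace (- a + a)%Z with 0%Z in Ej by lia.
      rewrite (f1 : f (Some 0%Z) = sone), smul_1l in Ej. simpl. rewrite Ej. f_equal. f_equal. lia. }
    destruct (classic (exists i j, (i < j)%nat /\ g i = g j)) as [[i [j [H1 H2]]]|Hn].
    - eauto.
    - exfalso.
      set (l := map g (seq 0 (S (length s)))).
      assert (Hl : length l = S (length s)) by (unfold l; now rewrite length_map, length_seq).
      assert (HN : NoDup l).
      { apply (NoDup_nth l (g 0%nat)). intros i j Hi Hj' E.
        rewrite Hl in Hi, Hj'. unfold l in E.
        rewrite !map_nth, !seq_nth in E by lia. simpl in E.
        destruct (Nat.lt_total i j) as [L|[L|L]]; auto;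
          exfalso; apply Hn; eauto. }
      assert (Hinc : incl l s).
      { intros x Hx. unfold l in Hx. apply in_map_iff in Hx.
        destruct Hx as [j [<- _]]. apply Hg. }
      pose proof (NoDup_incl_length HN Hinc). lia. }
  intros x y.
  destruct (classic (x = szero)) as [->|Hx]. { right; apply sadd_0l. }
  destruct (classic (y = szero)) as [->|Hy]. { left; rewrite sadd_comm; apply sadd_0l. }
  destruct (Hd x Hx) as [x' [Hx1 Hx2]].
  assert (Hxu : is_unit x) by (exists x'; auto).
  assert (Hx'u : is_unit x') by (exists x; auto).
  set (u := smul x' y).
  assert (Hu : is_unit u) by (apply unit_mul; auto).
  assert (Exu : smul x u = y) by (unfold u; rewrite smul_assoc, Hx1, smul_1l; auto).
  destruct (Hpow u Hu) as [m [k Ek]].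
  assert (Hc : sadd sone (pw D u (S m)) = pw D u (S m) \/ sadd sone (pw D u (S m)) = sone).
  { rewrite Ek, <- f1, <- fadd. simpl.
    destruct (Z.le_ge_cases 0 k); [left|right]; f_equal; f_equal; lia. }
  destruct (sel_unit D idem1 one_ne0 u m Hu Hd Hc) as [E|E].
  - right. rewrite <- (smul_1r D x) at 1. rewrite <- Exu at 1.
    rewrite <- smul_addr, E. exact Exu.
  - left. rewrite <- (smul_1r D x) at 1. rewrite <- Exu at 1.
    rewrite <- smul_addr, E, smul_1r. reflexivity.
Qed.
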